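(* Let $k\ge2$ be an integer. For every online 1-bounded space $k$-cardinality constrained algorithm $ALG$ and every integer $m\ge3$, there exists an item sequence $I$ such that $OPT_k(I)=m$ and: (A) if $k=2$, $ALG(I)\ge2\cdot OPT_k(I)-2$; (B) if $k\ge3$, $ALG(I)\ge\left(3-\frac2k\right)\cdot OPT_k(I)-5+\frac5k$.
   Context: The $k$-cardinality constrained bin packing problem: an item sequence $I=(a_1,\dots,a_n)\in(0,1]^n$ must be packed into bins of capacity $1$ with at most $k$ items per bin; $OPT_k(I)$ is the minimum number of non-empty bins, $ALG(I)$ the number used by $ALG$. A $k$-cardinality constrained algorithm always outputs packings with at most $k$ items per bin. An online algorithm processes the items in the given order, irrevocably packing each item into a bin before seeing any later item. A bin is open if it contains an item and may still receive items; closed bins never receive further items. A 1-bounded space algorithm keeps at most one open bin at any time, so each item goes either into the most recently opened bin or into a new bin. *)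

(* Defs.v *)
From HB Require Import structures.
From mathcomp Require Import all_boot all_order all_algebra.
From mathcomp Require Import reals.
Set Implicit Arguments. Unset Strict Implicit. Unset Printing Implicit Defensive.
Import Order.TTheory GRing.Theory Num.Theory.
Local Open Scope ring_scope.

Section BinPacking.
Variable R : realType.

Definition valid_items (I : seq R) : Prop := forall x, x \in I -> 0 < x <= 1.

Definition valid_bin (k : nat) (b : seq R) : bool :=
  (size b <= k)%N && (\sum_(x <- b) x <= 1).

(* A deterministic online 1-bounded space algorithm: given the items seen so
   far (in order) and the new item, it decides whether to open a new bin
   (true; this closes the current open bin) or to put the item into the
   current open bin (false).  When no bin is open yet (first item) a new bin
   is opened regardless. *)
Definition online_alg := seq R -> R -> bool.

(* Bins produced, most recent (the open bin) first. *)
Fixpoint pack_aux (alg : online_alg) (past : seq R) (bins : seq (seq R))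
    (I : seq R) : seq (seq R) :=
  match I with
  | [::] => bins
  | a :: I' =>
      let bins' :=
        if alg past a then [:: a] :: bins
        else match bins with
             | [::] => [:: [:: a]]
             | b :: bs => rcons b a :: bs
             end in
      pack_aux alg (rcons past a) bins' I'
  end.

Definition pack (alg : online_alg) (I : seq R) := pack_aux alg [::] [::] I.

Definition ALG (alg : online_alg) (I : seq R) : nat := size (pack alg I).

Definition k_card_alg (k : nat) (alg : online_alg) : Prop :=
  forall I, valid_items I -> all (valid_bin k) (pack alg I).

(* An offline packing of I: item i goes to bin f i (n items never need more
   than n bin labels). *)
Definition feasible_packing (k : nat) (I : seq R)
    (f : 'I_(size I) -> 'I_(size I)) : Prop :=
  forall b : 'I_(size I),
    (#|[set i | f i == b]| <= k)%N /\
    \sum_(i < size I | f i == b) I`_i <= 1.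

Arguments feasible_packing : clear implicits.

Definition nbins (I : seq R) (f : 'I_(size I) -> 'I_(size I)) : nat :=
  #|f @: [set: 'I_(size I)]|.

Arguments nbins : clear implicits.

Definition OPT_eq (k : nat) (I : seq R) (m : nat) : Prop :=
  (exists f, feasible_packing k I f /\ nbins I f = m) /\
  (forall f, feasible_packing k I f -> (m <= nbins I f)%N).

End BinPacking.

(* Main.v *)
Require Import Defs.
From HB Require Import structures.
From mathcomp Require Import all_boot all_order all_algebra.
From mathcomp Require Import reals.
From mathcomp Require Import zify ring lra.
Set Implicit Arguments. Unset Strict Implicit. Unset Printing Implicit Defensive.
Import Order.TTheory GRing.Theory Num.Theory.
Local Open Scope ring_scope.

Section Packing.
Variable R : realType.

Lemma pack_aux_flatten (alg : online_alg R) I past bins :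
  flatten (rev (pack_aux alg past bins I)) = flatten (rev bins) ++ I.
Proof.
elim: I past bins => [|a I IH] past bins /=; first by rewrite cats0.
rewrite IH; case: (alg past a) => /=.
  by rewrite rev_cons -cats1 flatten_cat -catA.
case: bins => [|b bs] /=; first by [].
by rewrite !rev_cons -!cats1 !flatten_cat /= !cats0 -!catA.
Qed.

Lemma pack_flatten (alg : online_alg R) I : flatten (rev (pack alg I)) = I.
Proof. by rewrite /pack pack_aux_flatten. Qed.

Lemma size_flatten_le k (segs : seq (seq R)) :
  all (valid_bin k) segs -> (size (flatten segs) <= k * size segs)%N.
Proof.
elim: segs => [|s segs IH] //= /andP[/andP[Hs _] Ha].
rewrite size_cat mulnS; exact: leq_add Hs (IH Ha).
Qed.

Lemma segs_lower k (segs : seq (seq R)) (xs ys : seq R) :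
  all (valid_bin k) segs ->
  flatten segs = xs ++ ys ->
  (forall a, a \in xs ++ ys -> 0 <= a) ->
  (forall i, (i < size xs)%N -> 1 < (xs ++ ys)`_i + (xs ++ ys)`_i.+1) ->
  (k * size xs + size ys <= k * size segs)%N.
Proof.
elim: segs xs => [|s segs IH] xs.
  by move=> _ /=; case: xs => [|? ?]; case: ys => [|? ?] //= _ _ _; rewrite muln0.
move=> /= /andP[Hs Ha] Hf Hnn Hch.
case: xs Hf Hnn Hch => [|x xs] Hf Hnn Hch.
  move: Hf => /= <-; rewrite size_cat /= mulnS.
  have := size_flatten_le Ha; have /andP[H1 _] := Hs.
  lia.
case: s Hs Hf => [|y [|z s]] Hs Hf.
- have := IH (x :: xs) Ha Hf Hnn Hch; rewrite /= mulnS; lia.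
- case: Hf => <- Hf.
  have := IH xs Ha Hf.
  have Hnn' : forall a, a \in xs ++ ys -> 0 <= a.
    by move=> a Ha'; apply: Hnn; rewrite /= in_cons Ha' orbT.
  have Hch' : forall i, (i < size xs)%N -> 1 < (xs ++ ys)`_i + (xs ++ ys)`_i.+1.
    by move=> i Hi; have := Hch i.+1; rewrite /=; apply.
  move=> /(_ Hnn' Hch'); rewrite /= !mulnS; lia.
- exfalso. case: Hf => Hy Hf.
  have Hin : forall j, j \in s -> 0 <= j.
    by move=> j Hj; apply: Hnn; rewrite /= in_cons -Hf in_cons mem_cat Hj !orbT.
  have := Hch 0%N isT; rewrite /= -Hf /= -Hy.
  move: Hs => /andP[_]; rewrite !big_cons.
  have H0 : 0 <= \sum_(j <- s) j by rewrite big_seq; apply: sumr_ge0.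
  lra.
Qed.
End Packing.

Local Close Scope ring_scope.
Section Constr.
Variables k N : nat.
Hypothesis hk : 2 <= k.
Hypothesis hN : 2 <= N.

Definition Mw := 4 * N.+1 * k.
Definition wt p := if p < 2 * N then
   (if p %% 2 == 1 then (2 * (N - p %/ 2) + 1) * k else Mw - 2 * (N - p %/ 2) * k)
   else 1.
Definition nR := (k - 2) * (N - 1).
Definition nn := 2 * N + nR.
Definition gl p := if p < 2 * N then
   (if p %% 2 == 1 then (if p == 1 then N else p %/ 2 - 1) else p %/ 2)
   else (p - 2 * N) %/ (k - 2).
Definition phi p := if p < 2 * N then p %% 2 else 2 + (p - 2 * N) %% (k - 2).
Definition cap c j := if j == 0 then wt (2 * c) else if j == 1 then
   (if c == N then wt 1 else wt (2 * c + 3)) else 1.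

Lemma wt_bounds p : 0 < wt p <= Mw.
Proof. rewrite /wt /Mw; case: ifP => H1; last lia. case: ifP => H2; nia. Qed.

Lemma wt_chain p : p < 2 * N - 1 -> Mw < wt p + wt p.+1.
Proof.
move=> Hp; rewrite /wt /Mw.
have -> : p < 2 * N by lia.
have -> : p.+1 < 2 * N by lia.
case: ifP => H1; case: ifP => H2; nia.
Qed.

Lemma wt_pair j j' : j < N -> j' < N -> j != j' -> Mw < wt (2 * j) + wt (2 * j').
Proof.
move=> H1 H2 H3; rewrite /wt /Mw.
have -> : 2 * j < 2 * N by lia.
have -> : 2 * j' < 2 * N by lia.
have -> : (2 * j) %% 2 == 1 = false by lia.
have -> : (2 * j') %% 2 == 1 = false by lia.
have -> : (2 * j) %/ 2 = j by lia.
have -> : (2 * j') %/ 2 = j' by lia.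
nia.
Qed.

Lemma wt_pair1 j : j < N -> Mw < wt (2 * j) + wt 1.
Proof.
move=> H1; rewrite /wt /Mw.
have -> : 2 * j < 2 * N by lia.
have -> : 1 < 2 * N by lia.
have -> : (2 * j) %% 2 == 1 = false by lia.
have -> : (2 * j) %/ 2 = j by lia.
rewrite /=. nia.
Qed.

Lemma run_pos p : p < nn -> (p < 2 * N) = false -> 0 < k - 2.
Proof. rewrite /nn /nR => H1 H2. have : 0 < (k - 2) * (N - 1) by lia. rewrite muln_gt0; case/andP => //. Qed.

Lemma gl_le p : p < nn -> gl p <= N.
Proof.
move=> Hp; rewrite /gl; case: ifP => H1.
  case: ifP => H2; last lia. case: ifP => H3; lia.
have Hk := run_pos Hp H1.
rewrite -ltnS; apply: (leq_trans _ (leqnSn _)).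
rewrite ltn_divLR //. move: Hp; rewrite /nn /nR. nia.
Qed.

Lemma phi_lt p : p < nn -> phi p < k.
Proof.
move=> Hp; rewrite /phi; case: ifP => H1; first lia.
have Hk := run_pos Hp H1.
have := ltn_pmod (p - 2 * N) Hk. lia.
Qed.

Lemma gl_phi_inj p q : p < nn -> q < nn -> gl p = gl q -> phi p = phi q -> p = q.
Proof.
move=> Hp Hq; rewrite /gl /phi.
case H1: (p < 2 * N); case H2: (q < 2 * N).
- case H3: (p %% 2 == 1); case H4: (q %% 2 == 1); case H5: (p == 1); case H6: (q == 1); lia.
- have := ltn_pmod (q - 2 * N) (run_pos Hq H2); lia.
- have := ltn_pmod (p - 2 * N) (run_pos Hp H1); lia.
- move=> Hd Hm0.
  have Hm : (p - 2 * N) %% (k - 2) = (q - 2 * N) %% (k - 2) by lia.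
  have E : p - 2 * N = q - 2 * N.
    by rewrite (divn_eq (p - 2 * N) (k - 2)) (divn_eq (q - 2 * N) (k - 2)) Hd Hm.
  lia.
Qed.

Lemma wt_cap p : p < nn -> wt p = cap (gl p) (phi p).
Proof.
move=> Hp; rewrite /cap /gl /phi.
case H1: (p < 2 * N).
  case H2: (p %% 2 == 1).
    have -> : (p %% 2 == 0) = false by lia.
    case H3: (p == 1).
      by rewrite eqxx (eqP H3).
    have -> : (p %/ 2 - 1 == N) = false by lia.
    congr wt; lia.
  have -> : p %% 2 == 0 by lia.
  congr wt; lia.
have -> : (2 + (p - 2 * N) %% (k - 2) == 0) = false by [].
have -> : (2 + (p - 2 * N) %% (k - 2) == 1) = false by [].
by rewrite /wt H1.
Qed.

Lemma cap_sum c : cap c 0 + cap c 1 + (k - 2) <= Mw.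
Proof.
rewrite /cap /= /wt /Mw.
case: (ltngtP c N) => Hc.
- have -> : 2 * c < 2 * N by lia.
  have -> : (2 * c) %% 2 == 1 = false by lia.
  have -> : (2 * c) %/ 2 = c by lia.
  case: ifP => H1.
    have -> : (2 * c + 3) %% 2 == 1 by lia.
    have -> : (2 * c + 3) %/ 2 = c + 1 by lia.
    nia.
  nia.
- have -> : 2 * c < 2 * N = false by lia.
  have -> : 2 * c + 3 < 2 * N = false by lia.
  nia.
- subst c. rewrite ltnn.
  have -> : 1 < 2 * N by lia.
  rewrite /=. nia.
Qed.

End Constr.

Local Open Scope ring_scope.

Section Real.
Variable R : realType.
Variables k' N : nat.
Hypothesis hN : (2 <= N)%N.
Local Notation k := k'.+2.
Local Notation M := (Mw k N).
Local Notation n := (nn k N).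
Let hk2 : (2 <= k)%N := erefl.

Definition item (p : nat) : R := (wt k N p)%:R / M%:R.
Definition Iseq : seq R := mkseq item n.

Lemma size_Iseq : size Iseq = n.
Proof. by rewrite size_mkseq. Qed.

Lemma nth_Iseq p : (p < n)%N -> Iseq`_p = item p.
Proof. by move=> Hp; rewrite nth_mkseq. Qed.

Lemma M_gt0 : (0 < M)%N.
Proof. rewrite /Mw; lia. Qed.

Lemma item_ge0 p : 0 <= item p.
Proof. by rewrite /item divr_ge0 ?ler0n. Qed.

Lemma valid_Iseq : valid_items Iseq.
Proof.
move=> x /mapP [p _ ->]; have /andP[H1 H2] := @wt_bounds k N hk2 hN p.
have HM : 0 < (M%:R : R) by rewrite ltr0n M_gt0.
rewrite /item divr_gt0 ?ltr0n //= ler_pdivrMr // mul1r ler_nat //.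
Qed.

Lemma item_gt1 p q : (M < wt k N p + wt k N q)%N -> 1 < item p + item q.
Proof.
move=> H.
have HM : 0 < (M%:R : R) by rewrite ltr0n M_gt0.
rewrite /item -mulrDl ltr_pdivlMr // mul1r -natrD ltr_nat //.
Qed.

Lemma sum2 (m : nat) (F : 'I_m -> R) (P : pred 'I_m) p q :
  (forall i, 0 <= F i) -> p != q -> P p -> P q ->
  F p + F q <= \sum_(i | P i) F i.
Proof.
move=> H0 Hpq Pp Pq.
rewrite (bigD1 p) //= (bigD1 q) /=; last by rewrite Pq eq_sym Hpq.
have : 0 <= \sum_(i | (P i && (i != p)) && (i != q)) F i by apply: sumr_ge0.
lra.
Qed.

Lemma opt_lower (f : 'I_(size Iseq) -> 'I_(size Iseq)) :
  feasible_packing k f -> (N.+1 <= nbins f)%N.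
Proof.
move=> Hf.
have Hn0 : (0 < size Iseq)%N by rewrite size_Iseq /nn; lia.
pose i0 : 'I_(size Iseq) := Ordinal Hn0.
pose pos (j : nat) := if (j < N)%N then (2 * j)%N else 1%N.
pose h (j : 'I_N.+1) : 'I_(size Iseq) := insubd i0 (pos j).
have Hpos j : (j <= N)%N -> (pos j < size Iseq)%N.
  by move=> Hj; rewrite size_Iseq /pos /nn; case: ifP => ?; lia.
have Hh j : val (h j) = pos j.
  have Hj : (j <= N)%N by rewrite -ltnS.
  by rewrite /h val_insubd (Hpos j Hj).
have Hinj : injective (fun j => f (h j)).
  move=> j1 j2 E; apply: val_inj; case: (eqVneq (val j1) (val j2)) => // Hne0.
  have Hne : (nat_of_ord j1 <> nat_of_ord j2) by apply/eqP.
  have Hne' : h j1 != h j2.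
    apply/negP => /eqP/(congr1 val)/eqP; rewrite !Hh /pos.
    have := ltn_ord j1; have := ltn_ord j2.
    case: ifP => A; case: ifP => B; lia.
  have [_ Hs] := Hf (f (h j1)).
  have Hi (i : 'I_(size Iseq)) : Iseq`_i = item i.
    by apply: nth_Iseq; rewrite -size_Iseq.
  have Hnn (i : 'I_(size Iseq)) : 0 <= Iseq`_i by rewrite Hi item_ge0.
  have H2 := sum2 (F := fun i : 'I_(size Iseq) => Iseq`_i)
     (P := fun i => f i == f (h j1)) Hnn Hne' (eqxx _) (introT eqP (esym E)).
  rewrite /= !Hi !Hh in H2.
  have : 1 < item (pos j1) + item (pos j2).
    apply: item_gt1; rewrite /pos.
    have := ltn_ord j1; have := ltn_ord j2.
    case: ifP => A; case: ifP => B => L1 L2.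
    - by apply: (@wt_pair k N hk2 hN) => //; lia.
    - by apply: (@wt_pair1 k N hk2 hN).
    - by rewrite addnC; apply: (@wt_pair1 k N hk2 hN).
    - lia.
  move=> H1; exfalso; have := lt_le_trans H1 (le_trans H2 Hs); by rewrite ltxx.
rewrite /nbins.
have <- : #|[set f (h j) | j in [set: 'I_N.+1]]| = N.+1.
  by rewrite card_in_imset ?cardsT ?card_ord // => a b _ _; apply: Hinj.
apply: subset_leq_card; apply/subsetP => x /imsetP [j _ ->].
by apply: imset_f.
Qed.

Lemma size_gt p : (p < n)%N -> (p < size Iseq)%N.
Proof. by rewrite size_Iseq. Qed.

Definition fo (i : 'I_(size Iseq)) : 'I_(size Iseq) := insubd i (gl k N i).

Lemma fo_val i : val (fo i) = gl k N i.
Proof.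
have Hi : (i < n)%N by rewrite -size_Iseq.
rewrite /fo val_insubd.
have := gl_le hk2 hN Hi.
have : (N < size Iseq)%N by rewrite size_Iseq /nn; lia.
by move=> H1 H2; rewrite (leq_ltn_trans H2 H1).
Qed.

Lemma fo_val' i : nat_of_ord (fo i) = gl k N i.
Proof. exact: fo_val. Qed.

Lemma fo_feasible : feasible_packing k fo.
Proof.
move=> b; set S := [set i | fo i == b].
have Hlt (i : 'I_(size Iseq)) : (i < n)%N by rewrite -size_Iseq.
pose psi (i : 'I_(size Iseq)) : 'I_k := inord (phi k N i).
have Hpsi i : nat_of_ord (psi i) = phi k N i by rewrite inordK // (phi_lt hk2 hN (Hlt i)).
have Hinj : {in S &, injective psi}.
  move=> i j; rewrite !inE => /eqP Hi /eqP Hj E.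
  apply: val_inj; apply: (gl_phi_inj hk2 hN (Hlt i) (Hlt j)).
    by rewrite -!fo_val Hi Hj.
  by rewrite -!Hpsi E.
split.
  rewrite -(card_in_imset Hinj); apply: leq_trans (max_card _) _.
  by rewrite card_ord.
have Hsum : (\sum_(i in S) wt k N i <= M)%N.
  have -> : (\sum_(i in S) wt k N i = \sum_(i in S) cap k N (val b) (psi i))%N.
    apply: eq_bigr => i; rewrite inE => /eqP Hi.
    by rewrite (wt_cap hk2 hN (Hlt i)) -fo_val Hi Hpsi.
  rewrite -(big_imset (fun j : 'I_k => cap k N (val b) j) Hinj) /=.
  apply: leq_trans (cap_sum hk2 hN (val b)).
  apply: (@leq_trans (\sum_(j : 'I_k) cap k N b j)%N).
    rewrite [X in (_ <= X)%N](bigID (mem (psi @: S))) /=; exact: leq_addr.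
  rewrite !big_ord_recl /=.
  have -> : (\sum_(i < k') cap k N b (lift ord0 (lift ord0 i)) = k')%N.
    by rewrite (eq_bigr (fun _ => 1%N)) ?sum1_card ?card_ord.
  have -> : (k'.+2 - 2 = k')%N by lia.
  by rewrite addnA.
have HM : 0 < (M%:R : R) by rewrite ltr0n M_gt0.
have -> : \sum_(i < size Iseq | fo i == b) Iseq`_i = \sum_(i in S) item i.
  apply: eq_big => i; first by rewrite inE.
  by move=> _; apply: nth_Iseq.
rewrite /item -mulr_suml -natr_sum ler_pdivrMr // mul1r ler_nat //.
Qed.

Lemma fo_nbins : nbins fo = N.+1.
Proof.
apply/eqP; rewrite eqn_leq (opt_lower fo_feasible) andbT.
rewrite /nbins.
pose t (c : 'I_(size Iseq)) : 'I_N.+1 := inord c.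
have Hinj : {in fo @: setT &, injective t}.
  move=> c d /imsetP[i _ ->] /imsetP[j _ ->] E; apply: val_inj.
  have E' := congr1 (@nat_of_ord _) E.
  rewrite /t !inordK in E'; try by rewrite ltnS fo_val' gl_le // -size_Iseq.
  exact: E'.
rewrite -(card_in_imset Hinj); apply: leq_trans (max_card _) _.
by rewrite card_ord.
Qed.

Lemma alg_bound (alg : online_alg R) : k_card_alg k alg ->
  (k * (2 * N - 1) + (n - (2 * N - 1)) <= k * ALG alg Iseq)%N.
Proof.
move=> halg.
have Hv := halg _ valid_Iseq.
have Hn : (2 * N - 1 < n)%N by rewrite /nn; lia.
have := @segs_lower R k (rev (pack alg Iseq)) (take (2 * N - 1) Iseq)
  (drop (2 * N - 1) Iseq).
rewrite all_rev size_rev cat_take_drop pack_flatten size_take size_drop size_Iseq Hn.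
apply => //.
  by move=> a /valid_Iseq /andP[/ltW].
move=> i Hi; rewrite !nth_Iseq; try lia.
apply: item_gt1; apply: (wt_chain hk2 hN); lia.
Qed.

End Real.

Unset Implicit Arguments.

Theorem theorem14 (R : realType) (k : nat) (hk : (2 <= k)%N)
    (alg : online_alg R) (halg : k_card_alg k alg) (m : nat) (hm : (3 <= m)%N) :
  exists I : seq R,
    valid_items I /\ OPT_eq k I m /\
    (k = 2%N -> (ALG alg I)%:R >= 2 * m%:R - 2 :> R) /\
    ((3 <= k)%N ->
       (ALG alg I)%:R >= (3 - 2 / k%:R) * m%:R - 5 + 5 / k%:R :> R).
Proof.
case: k hk halg => [|[|k']] // _ halg.
pose N := m.-1.
have hN : (2 <= N)%N by rewrite /N; lia.
have Hm : m = N.+1 by rewrite /N; lia.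
exists (Iseq R k' N); split; first exact: (valid_Iseq hN).
split.
  split.
    exists (@fo R k' N); split; first exact: (fo_feasible hN).
    rewrite (fo_nbins R k' hN). by rewrite Hm.
  by move=> f Hf; rewrite Hm; exact: (opt_lower hN).
have HA := alg_bound hN halg.
move: (ALG alg (Iseq R k' N)) HA => A HA.
rewrite /nn /nR in HA.
split.
  move=> [Ek]; subst k'.
  have H : (2 * N <= A)%N by lia.
  have H' : ((2 * N)%:R <= A%:R :> R) by rewrite ler_nat.
  rewrite natrM in H'; rewrite Hm -addn1 natrD; lra.
move=> Hk.
have HN : (3 * k'.+2 * N.+1 + 5 <= k'.+2 * A + 2 * N.+1 + 5 * k'.+2)%N by nia.
have HK : 0 < (k'.+2)%:R :> R by rewrite ltr0n.
have HKn : (k'.+2)%:R != 0 :> R by rewrite gt_eqF.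
rewrite Hm.
have -> : (3 - 2 / (k'.+2)%:R) * (N.+1)%:R - 5 + 5 / (k'.+2)%:R =
   ((3 * k'.+2 * N.+1 + 5)%:R - (2 * N.+1 + 5 * k'.+2)%:R) / (k'.+2)%:R :> R.
  rewrite !natrD !natrM; field.
  apply/eqP => H0; have : 0 <= k'%:R :> R := ler0n _ _; lra.
rewrite ler_pdivrMr // lerBlDr.
have := HN; rewrite -(ler_nat R) !natrD !natrM => H.
rewrite mulrC; lra.
Qed.
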